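(* For all positive integers $n,m,L$ with $L\le m$ and all $M\in[0,m)$, \[ \frac{R^{\rm LC}(M,L)}{R^{\rm lb}(M,L)}\le 18, \] where \[ R^{\rm lb}(M,L)=\max\left\{\max_{s\in\{1,\dots,\min\{\lfloor m/L\rfloor,\,n\}\}}\left(Ls-\frac{sM}{\left\lfloor \lfloor m/L\rfloor / s\right\rfloor}\right),\ \frac{m-M}{\lceil m/L\rceil}\right\}. \]
   Context: Setting: server with library of $m$ files of $B$ bits each, $n$ users each with a cache of $M$ files, each user requesting $L$ distinct files; $\mathbf F$ is the $L\times n$ request matrix. For $M$ such that $t=nM/m$ is an integer, each file is split into $\binom nt$ packets $W_{f,\mathcal T}$ indexed by $t$-subsets $\mathcal T$ of users, and user $u$ caches the packets with $u\in\mathcal T$. The directed conflict graph $\mathcal H^d_{\mathbf F}$ has one vertex for each pair (packet $(f,\mathcal T)$, user $u$) with $f$ requested by $u$ and $u\notin\mathcal T$, and a directed edge from vertex $v_2$ to $v_1$ iff their packets differ and the packet of $v_1$ is not cached by the user of $v_2$. The directed local chromatic number $\chi_l(\mathcal H^d)$ is the minimum over proper colorings $c$ of the underlying undirected graph of $\max_v$ (number of distinct colors on the closed out-neighborhood of $v$, i.e. $v$ and its out-neighbors). For integer $t$, $R^{\rm LC}(M,L)=\max_{\mathbf F}\chi_l(\mathcal H^d_{\mathbf F})/\binom nt$ (in file units); for other $M\in[0,m]$, $R^{\rm LC}(M,L)$ is the rate obtained by memory sharing, i.e. the lower convex envelope in $M$ of the values at the points $M=tm/n$, $t=0,1,\dots,n$.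 *)

(* Defs.v *)
From HB Require Import structures.
From mathcomp Require Import all_boot all_order all_algebra.
Set Implicit Arguments. Unset Strict Implicit. Unset Printing Implicit Defensive.
Import Order.TTheory GRing.Theory Num.Theory.

Section CodedCaching.
Variables (n m L : nat).

(* A request matrix: L x n, entry (j,u) = j-th file requested by user u. *)
Definition request_matrix := 'M['I_m]_(L, n).

Definition valid_request (F : request_matrix) : bool :=
  [forall u : 'I_n, injectiveb (fun j : 'I_L => F j u)].

Definition requested (F : request_matrix) (u : 'I_n) (f : 'I_m) : bool :=
  [exists j : 'I_L, F j u == f].

(* candidate vertices: ((file f, subset T), user u) *)
Notation vtx := ((('I_m * {set 'I_n}) * 'I_n)%type).

Definition is_vertex (F : request_matrix) (t : nat) (v : vtx) : bool :=
  [&& #|v.1.2| == t, v.2 \notin v.1.2 & requested F v.2 v.1.1].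

(* directed edge v2 -> v1: packets differ and the packet of v1 is not cached
   by the user of v2 (user u caches W_{f,T} iff u \in T) *)
Definition arc (v2 v1 : vtx) : bool :=
  (v1.1 != v2.1) && (v2.2 \notin v1.1.2).

Definition proper_col (F : request_matrix) (t : nat) (K : eqType) (c : vtx -> K) :=
  [forall v : vtx, forall w : vtx,
     (is_vertex F t v && is_vertex F t w && (arc v w || arc w v)) ==> (c v != c w)].

Definition local_colors (F : request_matrix) (t : nat) (K : finType) (c : vtx -> K)
  (v : vtx) : nat :=
  #|c @: [set w : vtx | is_vertex F t w && ((w == v) || arc v w)]|.

(* directed local chromatic number; #|{: vtx}| colours always suffice (any proper
   colouring can be injectively relabelled onto at most #|vertices| colours
   without changing any local colour count), and #|{: vtx}| bounds the value. *)
Definition chi_l (F : request_matrix) (t : nat) : nat :=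
  \big[minn/#|{: vtx}|]_(c : {ffun vtx -> 'I_#|{: vtx}|} | proper_col F t c)
     \max_(v : vtx | is_vertex F t v) local_colors F t c v.

Variable R : realFieldType.
Local Open Scope ring_scope.

Definition RLC_pt (t : nat) : R :=
  (\max_(F : request_matrix | valid_request F) chi_l F t)%:R / ('C(n, t))%:R.

Definition xpt (t : nat) : R := t%:R * m%:R / n%:R.

Definition interp (t1 t2 : nat) (M : R) : R :=
  ((xpt t2 - M) * RLC_pt t1 + (M - xpt t1) * RLC_pt t2) / (xpt t2 - xpt t1).

(* lower convex envelope (memory sharing) at a non-grid point M in (0,m):
   minimum over pairs of grid points around M of the linear interpolation *)
Definition envelope (M : R) : R :=
  \big[Num.min/interp 0 n M]_(t1 : 'I_n.+1)
     \big[Num.min/interp 0 n M]_(t2 : 'I_n.+1 | (xpt t1 < M) && (M < xpt t2))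
        interp t1 t2 M.

Definition RLC (M : R) : R :=
  match [pick t : 'I_n.+1 | M * n%:R == t%:R * m%:R] with
  | Some t => RLC_pt t
  | None => envelope M
  end.

Definition Rlb (M : R) : R :=
  let q := (m %/ L)%N in
  \big[Num.max/(m%:R - M) / ((m + L.-1) %/ L)%N%:R]_(1 <= s < (minn q n).+1)
     ((L * s)%N%:R - s%:R * M / (q %/ s)%N%:R).

End CodedCaching.

(* Main.v *)
Require Import Defs.
From HB Require Import structures.
From mathcomp Require Import all_boot all_order all_algebra.
From mathcomp Require Import ring lra zify.
Set Implicit Arguments. Unset Strict Implicit. Unset Printing Implicit Defensive.
Import Order.TTheory GRing.Theory Num.Theory.
Local Open Scope ring_scope.




Lemma ratio_le (R : realFieldType) (a c b d : nat) : (0 < c)%N -> (0 < d)%N ->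
  (a * d <= b * c)%N -> (a%:R / c%:R : R) <= b%:R / d%:R.
Proof.
move=> c0 d0 H.
rewrite ler_pdivrMr ?ltr0n // mulrAC ler_pdivlMr ?ltr0n // -!natrM ler_nat.
exact: H.
Qed.
Lemma bigmin_nat_le (I : finType) (P : pred I) (G : I -> nat) x i :
  P i -> (\big[minn/x]_(j | P j) G j <= G i)%N.
Proof.
move=> Pi; have : i \in index_enum I by rewrite mem_index_enum.
elim: (index_enum I) => [//|a r IH]; rewrite inE big_cons.
case/orP => [/eqP <-|Hr]; first by rewrite Pi geq_minl.
case: ifP => _; last exact: IH.
by apply: leq_trans (geq_minr _ _) (IH Hr).
Qed.

Section Comb.
Variables (n m L : nat) (F : request_matrix n m L) (t : nat).
Hypotheses (n0 : (0 < n)%N) (m0 : (0 < m)%N).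
Notation vtx := ((('I_m * {set 'I_n}) * 'I_n)%type).

Lemma chi_le (K : finType) (k : vtx -> K) (B : nat) :
  (forall v w, is_vertex F t v -> is_vertex F t w -> Defs.arc v w || Defs.arc w v -> k v != k w) ->
  (forall v, is_vertex F t v ->
     (#|k @: [set w | is_vertex F t w && ((w == v) || Defs.arc v w)]| <= B)%N) ->
  (chi_l F t <= B)%N.
Proof.
move=> Hp Hl.
pose v0 : vtx := ((Ordinal m0, set0), Ordinal n0).
pose h (x : K) : 'I_#|{: vtx}| := enum_rank (odflt v0 [pick w | k w == x]).
pose c := [ffun v => h (k v)].
have hk : forall v w, h (k v) = h (k w) -> k v = k w.
  move=> v w /enum_rank_inj.
  case: pickP => [x /eqP Hx|/(_ v)]; last by rewrite eqxx.
  case: pickP => [y /eqP Hy|/(_ w)]; last by rewrite eqxx.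
  by move=> /= Exy; rewrite -Hx -Hy Exy.
have pc : proper_col F t c.
  apply/forallP => v; apply/forallP => w; apply/implyP => /andP[/andP[Hv Hw] Ha].
  rewrite !ffunE; apply/negP => /eqP /hk /eqP; apply/negP; exact: Hp.
rewrite /chi_l; apply: leq_trans (bigmin_nat_le _ _ pc) _.
apply/bigmax_leqP => v Hv.
apply: leq_trans (Hl v Hv).
rewrite /local_colors.
have -> : c @: [set w | is_vertex F t w && ((w == v) || Defs.arc v w)]
   = h @: (k @: [set w | is_vertex F t w && ((w == v) || Defs.arc v w)]).
  by rewrite -imset_comp; apply: eq_imset => x; rewrite ffunE.
exact: leq_imset_card.
Qed.


Lemma chi_le_A : (chi_l F t <= m * 'C(n.-1, t))%N.
Proof.
apply: (@chi_le _ (fun v : vtx => v.1)).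
  move=> v w _ _ /orP[] /andP[H _]; first by rewrite eq_sym.
  by [].
move=> v /and3P[_ Hv _].
pose S := [set T : {set 'I_n} | T \subset [set~ v.2] & #|T| == t].
apply: (@leq_trans #|setX [set: 'I_m] S|); last first.
  by rewrite cardsX cardsT card_ord cards_draws cardsC1 card_ord.
apply: subset_leq_card; apply/subsetP => p /imsetP[w].
rewrite inE => /andP[/and3P[Hw1 Hw2 _] Hor] ->.
rewrite !inE /=; apply/andP; split.
  case/orP: Hor => [/eqP ->|/andP[_ Ha]].
    by apply/subsetP => x Hx; rewrite !inE; apply: contraNneq Hv => <-.
  by apply/subsetP => x Hx; rewrite !inE; apply: contraNneq Ha => <-.
by [].
Qed.

Variable (L0 : (0 < L)%N).

Definition kB (v : vtx) : 'I_L * {set 'I_n} :=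
  (odflt (Ordinal L0) [pick j | F j v.2 == v.1.1], v.2 |: v.1.2).

Lemma kB_arc v w : is_vertex F t v -> is_vertex F t w -> Defs.arc v w -> kB v != kB w.
Proof.
move=> /and3P[_ Hv1 Hv2] /and3P[_ Hw1 Hw2] /andP[Hne Hvw].
apply/negP => /eqP [E1 E2].
have Hu : v.2 = w.2.
  have : v.2 \in w.2 |: w.1.2 by rewrite -E2 setU11.
  by rewrite in_setU (negbTE Hvw) orbF; move/set1P.
have ET : v.1.2 = w.1.2.
  by rewrite -(setU1K Hv1) -(setU1K Hw1) E2 Hu.
move: E1 Hv2 Hw2; rewrite /requested -Hu.
case: pickP => [j /eqP Hj|H]; last first.
  by move=> _ /existsP[j Hj]; move: (H j); rewrite Hj.
case: pickP => [j' /eqP Hj'|H]; last first.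
  by move=> _ _ /existsP[j2 Hj2]; move: (H j2); rewrite Hj2.
move=> /= Ejj _ _.
move: Hne Hj Hj' ET; case: (v.1) => [f1 T1]; case: (w.1) => [f2 T2] /=.
by move=> Hne Hj Hj2 ET; rewrite -Hj -Hj2 ET Ejj eqxx in Hne.
Qed.

Lemma chi_le_B : (chi_l F t <= L * 'C(n, t.+1))%N.
Proof.
apply: (@chi_le _ kB).
  move=> v w Hv Hw /orP[H|H]; first exact: kB_arc.
  by rewrite eq_sym; apply: kB_arc.
move=> v Hv.
pose S := [set T : {set 'I_n} | #|T| == t.+1].
apply: (@leq_trans #|setX [set: 'I_L] S|); last first.
  by rewrite cardsX cardsT card_ord card_draws card_ord.
apply: subset_leq_card; apply/subsetP => p /imsetP[w].
rewrite inE => /andP[/and3P[Hw1 Hw2 _] _] ->.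
by rewrite !inE /= cardsU1 Hw2 (eqP Hw1).
Qed.

End Comb.

Section Pt.
Variables (R : realFieldType) (n m L : nat).
Hypotheses (n0 : (0 < n)%N) (m0 : (0 < m)%N) (L0 : (0 < L)%N).

Lemma maxF_le (t B : nat) :
  (forall F : request_matrix n m L, (chi_l F t <= B)%N) ->
  (\max_(F : request_matrix n m L | valid_request F) chi_l F t <= B)%N.
Proof. by move=> H; apply/bigmax_leqP => F _; apply: H. Qed.

Lemma RLC_pt_A (t : nat) : (t <= n)%N ->
  RLC_pt n m L R t <= (m * (n - t))%N%:R / n%:R.
Proof.
move=> tn; rewrite /RLC_pt.
have Ct : (0 < 'C(n, t))%N by rewrite bin_gt0.
apply: ratio_le => //.
apply: (@leq_trans ((m * 'C(n.-1, t)) * n)).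
  by rewrite leq_mul2r (maxF_le (fun F => chi_le_A F t n0 m0)) orbT.
by rewrite -mulnA [('C(_,_) * n)%N]mulnC mul_bin_down mulnA.
Qed.

Lemma RLC_pt_B (t : nat) : (t <= n)%N ->
  RLC_pt n m L R t <= (L * (n - t))%N%:R / t.+1%:R.
Proof.
move=> tn; rewrite /RLC_pt.
have Ct : (0 < 'C(n, t))%N by rewrite bin_gt0.
apply: ratio_le => //.
apply: (@leq_trans ((L * 'C(n, t.+1)) * t.+1)).
  by rewrite leq_mul2r (maxF_le (fun F => chi_le_B F t n0 m0 L0)) orbT.
by rewrite -mulnA [('C(_,_) * t.+1)%N]mulnC mul_bin_left mulnA.
Qed.

End Pt.
Lemma W_le (R : realFieldType) (a b M c t r1 r2 : R) : 0 < a -> 0 < b ->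
  t * a / b < M -> M < (t + 1) * a / b ->
  r1 <= c * (b - t) -> r2 <= c * (b - (t + 1)) ->
  (((t + 1) * a / b - M) * r1 + (M - t * a / b) * r2) / ((t + 1) * a / b - t * a / b)
   <= c * b * (a - M) / a.
Proof.
move=> a0 b0 h1 h2 e1 e2.
have d0 : 0 < (t + 1) * a / b - t * a / b by lra.
rewrite ler_pdivrMr //.
apply: (@le_trans _ _ (((t + 1) * a / b - M) * (c * (b - t)) + (M - t * a / b) * (c * (b - (t + 1))))).
  apply: lerD; apply: ler_wpM2l => //; lra.
have an : a != 0 by rewrite gt_eqF.
have bn : b != 0 by rewrite gt_eqF.
rewrite le_eqVlt; apply/orP; left; apply/eqP; field.
by rewrite an bn.
Qed.

Lemma search (P : nat -> bool) (N : nat) : P 0%N -> ~~ P N ->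
  exists2 t, (t < N)%N & P t && ~~ P t.+1.
Proof.
move=> P0; elim: N => [|N IH] PN; first by rewrite P0 in PN.
case HN: (P N).
  by exists N => //; rewrite HN.
have [t tN Ht] := IH (negbT HN).
by exists t => //; apply: ltnW.
Qed.

Lemma RLC_ub (R : realFieldType) (n m L : nat) (M : R) :
  (0 < n)%N -> (0 < m)%N -> (0 < L)%N -> 0 <= M -> M < m%:R ->
  exists t : nat,
  [/\ RLC n m L M <= m%:R - M,
      RLC n m L M <= L%:R * n%:R * (m%:R - M) / (m%:R * t.+1%:R)
    & n%:R * M < t.+1%:R * m%:R].
Proof.
move=> n0 m0 L0 M0 Mm.
set a : R := m%:R; set b : R := n%:R; set l : R := L%:R.
have a0 : 0 < a by rewrite ltr0n.
have b0 : 0 < b by rewrite ltr0n.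
have an : a != 0 by rewrite gt_eqF.
have bn : b != 0 by rewrite gt_eqF.
rewrite /RLC; case: pickP => [t /eqP Et | Hng].
  exists t; have tn : (t <= n)%N by rewrite -ltnS.
  have EM : M = t%:R * a / b by rewrite -Et mulfK.
  split.
  - apply: le_trans (RLC_pt_A R L n0 m0 tn) _.
    rewrite natrM natrB // -/a -/b EM.
    rewrite le_eqVlt; apply/orP; left; apply/eqP; field.
    by rewrite bn.
  - apply: le_trans (RLC_pt_B R n0 m0 L0 tn) _.
    rewrite natrM natrB // -/l -/b EM.
    have t1 : (t.+1%:R : R) != 0 by rewrite pnatr_eq0.
    rewrite le_eqVlt; apply/orP; left; apply/eqP; field.
    by rewrite nat1r !pnatr_eq0 /= -!lt0n n0 m0.
  - rewrite mulrC Et ltr_pM2r // ltr_nat //.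
pose P (t : nat) := (t%:R * a <= M * b).
have P0 : P 0%N by rewrite /P mul0r mulr_ge0 // ltW.
have Pn : ~~ P n by rewrite /P -ltNge [_ * a]mulrC ltr_pM2r.
have [t tn /andP[Pt Pt1]] := search P0 Pn.
have tn' : (t < n.+1)%N by apply: ltnW.
have t1n' : (t.+1 < n.+1)%N by [].
have lt1 : t%:R * a < M * b.
  rewrite lt_neqAle (Pt : _ <= _) andbT.
  by have := Hng (inord t); rewrite /= inordK // eq_sym => ->.
have lt2 : M * b < t.+1%:R * a by rewrite ltNge; exact: Pt1.
have x1 : t%:R * a / b < M by rewrite ltr_pdivrMr.
have x2 : M < (t%:R + 1) * a / b by rewrite ltr_pdivlMr // natr1.
have r1A := RLC_pt_A R L n0 m0 (ltnW tn).
have r2A := RLC_pt_A R L n0 m0 tn.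
have r1B := RLC_pt_B R n0 m0 L0 (ltnW tn).
have r2B := RLC_pt_B R n0 m0 L0 tn.
have tp : (0 : R) < t%:R + 1 by rewrite natr1 ltr0n.
have tpn : (t%:R + 1 : R) != 0 by rewrite gt_eqF.
have key : forall c, RLC_pt n m L R t <= c * (b - t%:R) ->
    RLC_pt n m L R t.+1 <= c * (b - (t%:R + 1)) ->
    envelope n m L M <= c * b * (a - M) / a.
  move=> c h1 h2.
  rewrite /envelope; apply: (le_trans (bigmin_le _ (inord t) _)).
  have Hc : (fun t2 : 'I_n.+1 => (xpt n m R (inord t : 'I_n.+1) < M) && (M < xpt n m R t2)) (inord t.+1).
    by rewrite /= /xpt (inordK tn') (inordK t1n') -/a -/b x1 -natr1 x2.
  have := @bigmin_le_cond _ _ _ (interp n m L 0 n M) (inord t.+1) (fun t2 : 'I_n.+1 => (xpt n m R (inord t : 'I_n.+1) < M) && (M < xpt n m R t2))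
     (fun t2 : 'I_n.+1 => interp n m L (inord t : 'I_n.+1) t2 M) Hc.
  move=> Hb; apply: (le_trans Hb).
  rewrite /interp /xpt (inordK tn') (inordK t1n') -/a -/b -natr1.
  exact: W_le.
exists t; split.
- apply: le_trans (key (a / b) _ _) _.
  + apply: le_trans r1A _; rewrite natrM natrB ?(ltnW tn) // -/a -/b.
    by rewrite le_eqVlt; apply/orP; left; apply/eqP; field.
  + apply: le_trans r2A _; rewrite natrM natrB ?tn // -/a -/b -natr1.
    by rewrite le_eqVlt; apply/orP; left; apply/eqP; field.
  + by rewrite le_eqVlt; apply/orP; left; apply/eqP; field; rewrite an bn.
- apply: le_trans (key (l / (t%:R + 1)) _ _) _.
  + apply: le_trans r1B _; rewrite natrM natrB ?(ltnW tn) // -/l -/b -natr1.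
    by rewrite le_eqVlt; apply/orP; left; apply/eqP; field.
  + apply: le_trans r2B _.
    apply: le_trans (@ratio_le R (L * (n - t.+1)) t.+2 (L * (n - t.+1)) t.+1 _ _ _) _ => //.
      by rewrite leq_mul2l leqnSn orbT.
    rewrite natrM natrB ?tn // -/l -/b -natr1.
    by rewrite le_eqVlt; apply/orP; left; apply/eqP; field.
  + rewrite -natr1 le_eqVlt; apply/orP; left; apply/eqP; field.
    by rewrite an tpn.
- by rewrite [b * M]mulrC.
Qed.


Section Lb.
Variables (R : realFieldType) (n m L : nat) (M : R).

Lemma Rlb_A : (m%:R - M) / ((m + L.-1) %/ L)%N%:R <= Rlb n m L M.
Proof. exact: bigmax_ge_id. Qed.

Lemma Rlb_T (s : nat) : (1 <= s)%N -> (s <= minn (m %/ L) n)%N ->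
  (L * s)%N%:R - s%:R * M / ((m %/ L) %/ s)%N%:R <= Rlb n m L M.
Proof.
move=> s1 sN; rewrite /Rlb.
apply: (le_bigmax_seq _ _ _ (fun s => (L * s)%N%:R - s%:R * M / ((m %/ L) %/ s)%N%:R)) => //.
by rewrite mem_index_iota s1 ltnS.
Qed.

Lemma T_ge (s : nat) : (0 < L)%N -> (1 <= s)%N -> (s <= m %/ L)%N -> 0 <= M ->
  4%:R * (s%:R * M) <= (m %/ L)%N%:R * L%:R ->
  (L * s)%N%:R / 2%:R <= (L * s)%N%:R - s%:R * M / ((m %/ L) %/ s)%N%:R.
Proof.
move=> L0 s1 sq M0 H.
set q := (m %/ L)%N; set k := (q %/ s)%N.
have k1 : (0 < k)%N by rewrite divn_gt0 // (leq_trans _ s1).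
have qk : (q <= 2 * s * k)%N.
  have := ltn_ceil q (leq_trans (isT : 0 < 1)%N s1); rewrite -/k => h.
  have : (q < s * k + s)%N by rewrite mulnC -mulSnr.
  nia.
have qkR : (q%:R : R) <= 2%:R * s%:R * k%:R by rewrite -!natrM ler_nat.
have k0 : (0 : R) < k%:R by rewrite ltr0n.
have s0 : (0 : R) < s%:R by rewrite ltr0n (leq_trans _ s1).
have l0 : (0 : R) < L%:R by rewrite ltr0n.
have h2 : 2%:R * M <= L%:R * k%:R.
  rewrite -(ler_pM2l s0). nra.
have h3 : s%:R * M / k%:R <= (L * s)%N%:R / 2%:R.
  rewrite ler_pdivrMr // natrM. rewrite mulrAC ler_pdivlMr ?ltr0n //. nra.
lra.
Qed.

End Lb.

Lemma nat_aux1 (L m : nat) : (0 < L)%N -> (0 < m)%N -> (L <= L.-1 + m)%N.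
Proof. lia. Qed.
Lemma nat_aux2 (L m cl : nat) : (0 < L)%N -> (19 * L <= cl)%N -> (cl <= m + L.-1)%N -> (18 * L <= m)%N.
Proof. lia. Qed.

Lemma final (R : realFieldType) (n m L t : nat) (M X Rl : R) :
  (0 < n)%N -> (0 < m)%N -> (0 < L)%N -> (L <= m)%N ->
  0 <= M -> M < m%:R ->
  X <= m%:R - M ->
  X <= L%:R * n%:R * (m%:R - M) / (m%:R * t.+1%:R) ->
  n%:R * M < t.+1%:R * m%:R ->
  (m%:R - M) / ((m + L.-1) %/ L)%N%:R <= Rl ->
  (forall s : nat, (1 <= s)%N -> (s <= minn (m %/ L) n)%N ->
     (L * s)%N%:R - s%:R * M / ((m %/ L) %/ s)%N%:R <= Rl) ->
  X <= 18%:R * Rl.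
Proof.
move=> n0 m0 L0 Lm M0 Mm U1 Ut Ub RA RT.
set a : R := m%:R; set b : R := n%:R; set l : R := L%:R.
have a0 : 0 < a by rewrite ltr0n.
have b0 : 0 < b by rewrite ltr0n.
have l0 : 0 < l by rewrite ltr0n.
have t0 : (0 : R) < t.+1%:R by rewrite ltr0n.
have Ut' : X * (a * t.+1%:R) <= l * b * (a - M).
  by rewrite -ler_pdivlMr ?mulr_gt0.
have aM : 0 <= a - M by rewrite subr_ge0 ltW.
have lbaM : 0 <= l * b * (a - M) by rewrite !mulr_ge0 // ltW.
have laM : 0 <= l * (a - M) by rewrite !mulr_ge0 // ltW.
have U2 : X * a <= l * b * (a - M).
  case: (leP X 0) => HX; first by apply: le_trans lbaM; nra.
  apply: le_trans Ut'; rewrite mulrA ler_peMr ?ler1n //.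
  by rewrite mulr_ge0 // ltW.
have U3 : X * M <= l * (a - M).
  case: (leP X 0) => HX; first by apply: le_trans laM; nra.
  rewrite -(ler_pM2l b0). nra.
set c := ((m + L.-1) %/ L)%N; set q := (m %/ L)%N.
have H1 : (c * L <= m + L.-1)%N by apply: leq_trunc_div.
have H2 : (q * L <= m)%N by apply: leq_trunc_div.
have H3 : (m < q.+1 * L)%N by apply: ltn_ceil.
have H4 : (c.+1 * L > m + L.-1)%N by apply: ltn_ceil.
have c1 : (0 < c)%N by rewrite divn_gt0 // addnC; apply: nat_aux1.
have cR0 : (0 : R) < c%:R by rewrite ltr0n.
have RA' : (a - M) <= c%:R * Rl.
  by rewrite -ler_pdivrMl // mulrC.
have Rl0 : 0 <= Rl.
  by apply: le_trans RA; rewrite divr_ge0 // ltW.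
case: (leqP c 18) => hc.
  apply: le_trans U1 _; apply: le_trans RA' _.
  by rewrite ler_wpM2r // ler_nat.
have h19 : (19 * L <= c * L)%N by rewrite leq_mul2r hc orbT.
have h18 : (18 * L <= m)%N by exact: (@nat_aux2 L m _ L0 h19 H1).
have q18 : (18 <= q)%N.
  by rewrite -(mulnK 18 L0); apply: leq_div2r.
set ql : R := q%:R * l.
have clR : c%:R * l < a + l.
  have : (c * L < m + L)%N by apply: leq_ltn_trans H1 _; rewrite ltn_add2l prednK.
  by rewrite -(ltr_nat R) natrM natrD.
have qla : ql <= a by rewrite /ql -natrM ler_nat.
have aql : a < ql + l.
  by move: H3; rewrite -(ltr_nat R) natrM -natr1 mulrDl mul1r.
have ql18 : 18%:R * l <= ql.
  by rewrite /ql; apply: ler_wpM2r; [exact: ltW | rewrite ler_nat].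
case: (leP (a + l) (18%:R * M)) => hM.
  have Mp : 0 < M by lra.
  have : X * c%:R <= 18%:R * (a - M).
    rewrite -(ler_pM2l Mp).
    have h : X * M * c%:R <= l * (a - M) * c%:R by rewrite ler_wpM2r // ltW.
    have h' : c%:R * l * (a - M) <= (a + l) * (a - M) by rewrite ler_wpM2r // ltW.
    have h'' : (a + l) * (a - M) <= 18%:R * M * (a - M) by rewrite ler_wpM2r // ltW.
    nra.
  move=> HX; apply: le_trans (_ : X <= 18%:R * ((a - M) / c%:R)) _.
    by rewrite mulrA ler_pdivlMr.
  by rewrite ler_wpM2l // ?ler0n.
have l18 : 0 < ql by lra.
set N := minn q n.
have N1 : (1 <= N)%N by rewrite leq_min n0 (leq_trans _ q18).
have Tb : forall s, (1 <= s)%N -> (s <= N)%N ->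
    4%:R * (s%:R * M) <= ql -> (L * s)%N%:R / 2%:R <= Rl.
  move=> s s1 sN Hs; apply: le_trans (RT s s1 sN).
  apply: T_ge => //; first by apply: leq_trans sN (geq_minl _ _).
pose P (s : nat) := 4%:R * (s%:R * M) <= ql.
have P1 : P 1%N by rewrite /P mul1r; lra.
case PN : (P N).
  have HT := Tb N N1 (leqnn N) PN.
  rewrite natrM -/l in HT.
  case: (leqP q n) => hqn.
    have EN : N = q by rewrite /N; apply/minn_idPl.
    rewrite EN in HT.
    have : X <= 9%:R * ql by lra.
    move=> HX; apply: le_trans HX _; rewrite /ql; lra.
  have EN : N = n by rewrite /N; apply/minn_idPr/ltnW.
  rewrite EN -/b in HT.
  have Xlb : X <= l * b.
    rewrite -(ler_pM2r a0); apply: le_trans U2 _.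
    apply: ler_wpM2l; [by rewrite mulr_ge0 // ltW | lra].
  lra.
pose P' (i : nat) := P i.+1.
have P'0 : P' 0%N by [].
have P'N : ~~ P' N.-1 by rewrite /P' prednK // PN.
have [i iN /andP[Pi Pi1]] := search P'0 P'N.
have s1 : (1 <= i.+1)%N by [].
have sN : (i.+1 <= N)%N by apply: leq_trans iN (leq_pred N).
have HT := Tb i.+1 s1 sN Pi.
rewrite natrM -/l in HT.
move: Pi Pi1; rewrite /P' /P -ltNge => Pi Pi1.
set s := i.+1 in HT Pi Pi1 s1 sN.
have sR1 : (1 : R) <= s%:R by rewrite ler1n.
have Mp : 0 < M.
  have : 0 < 4%:R * (s.+1%:R * M) by lra.
  by rewrite pmulr_rgt0 // pmulr_rgt0 // ltr0n.
have sM : M <= s%:R * M by rewrite ler_peMl // ltW.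
have Pi1' : ql < 4%:R * (s%:R * M) + 4%:R * M.
  have E : (s.+1%:R : R) = s%:R + 1 by rewrite natr1.
  by move: Pi1; rewrite E mulrDl mul1r; lra.
have a9 : a <= 9%:R * (s%:R * M) by lra.
have HX : X <= 9%:R * (l * s%:R).
  case: (leP X 0) => HX0.
    by apply: le_trans HX0 _; rewrite !mulr_ge0 ?ler0n // ltW.
  rewrite -(ler_pM2r Mp).
  apply: le_trans U3 _.
  have : l * (a - M) <= l * (9%:R * (s%:R * M)) by rewrite ler_wpM2l ?ltW //; lra.
  move=> h; apply: le_trans h _.
  by rewrite le_eqVlt; apply/orP; left; apply/eqP; ring.
apply: le_trans HX _; lra.
Qed.

Theorem theorem6 (R : realFieldType) (n m L : nat) (M : R) :
  (0 < n)%N -> (0 < m)%N -> (0 < L)%N -> (L <= m)%N ->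
  0 <= M -> M < m%:R ->
  RLC n m L M / Rlb n m L M <= 18.
Proof.
move=> n0 m0 L0 Lm M0 Mm.
have [t [U1 Ut Ub]] := RLC_ub n0 m0 L0 M0 Mm.
have HA := Rlb_A n m L M.
have c1 : (0 < ((m + L.-1) %/ L))%N by rewrite divn_gt0 // addnC; apply: nat_aux1.
have Rp : 0 < Rlb n m L M.
  apply: lt_le_trans HA; rewrite divr_gt0 ?ltr0n // subr_gt0 //.
rewrite ler_pdivrMr //.
apply: (final n0 m0 L0 Lm M0 Mm U1 Ut Ub HA).
by move=> s s1 sN; apply: Rlb_T.
Qed.
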